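(* Let $m\ge1$ and let $W$ be a B-DMC. For $n\ge1$ let $E[J_n]=\frac{1}{N(n)}\sum_{\mathbf s\in\mathcal S_n}J(W_{\mathbf s})$, and for $n\le0$ let $E[J_n]=J(W)$. Then for every $n\ge1$, with $\mu=N(n-1)/N(n)$ (so $1-\mu=N(n-m)/N(n)$), $$E[J_n]\ \ge\ \mu\,E[J_{n-1}]+(1-\mu)\,E[J_{n-m}],$$ and equality holds only if, for every $\mathbf s=(s_1,\dots,s_n)\in\mathcal S_n$ with $s_n\in\{+,-\}$, one has $J(W_{(s_1,\dots,s_{n-1})})\in\{0,1\}$ or $J(W_{(s_1,\dots,s_{n-m})})\in\{0,1\}$ (where $(s_1,\dots,s_{n-m})$ is the empty string if $n\le m$).
   Context: Fix an integer $m\ge1$. Define integers $N(n)$ by $N(n)=1$ for $1-m\le n\le 0$ and $N(n)=N(n-1)+N(n-m)$ for $n\ge1$; write $\mathbb N_n=\{1,\dots,N(n)\}$ (so $\mathbb N_n=\{1\}$ for $n\le 0$, and $\mathbb N_{n-m}\subseteq\mathbb N_{n-1}$). Define vectors $\mathbf s_n^{(i)}\in\{+,-,\bigstar\}^n$ for $n\ge0$, $i\in\mathbb N_n$, recursively: $\mathbf s_0^{(1)}$ is the empty vector, and for $n\ge1$: $\mathbf s_n^{(j)}=(\mathbf s_{n-1}^{(j)},+)$ and $\mathbf s_n^{(j+N(n-1))}=(\mathbf s_{n-1}^{(j)},-)$ for $j\in\mathbb N_{n-m}$, while $\mathbf s_n^{(j)}=(\mathbf s_{n-1}^{(j)},\bigstar)$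 for $j\in\mathbb N_{n-1}\setminus\mathbb N_{n-m}$. Let $\mathcal S_n=\{\mathbf s_n^{(i)}:i\in\mathbb N_n\}$ for $n\ge1$. A B-DMC $V$ is a channel with input alphabet $\{0,1\}$, a finite output alphabet $\mathcal Y$ and transition probabilities $V(y|x)$. With base-2 logarithms and uniform input: $I(V)=\sum_{y}\sum_{x}\frac12V(y|x)\log\frac{V(y|x)}{\frac12V(y|0)+\frac12V(y|1)}$, $Z(V)=\sum_y\sqrt{V(y|0)V(y|1)}$, $J(V)=\log\frac{2}{1+Z(V)}$. For B-DMCs $V':\{0,1\}\to\mathcal Y_1$ and $V'':\{0,1\}\to\mathcal Y_2$ define $V'\boxminus V'':\{0,1\}\to\mathcal Y_1\times\mathcal Y_2$ by $(V'\boxminus V'')(y_1,y_2|x_1)=\sum_{x_2\in\{0,1\}}\frac12V'(y_1|x_1\oplus x_2)V''(y_2|x_2)$, and $V'\boxplus V'':\{0,1\}\to\mathcal Y_1\times\mathcal Y_2\times\{0,1\}$ by $(V'\boxplus V'')(y_1,y_2,x_1|x_2)=\frac12V'(y_1|x_1\oplus x_2)V''(y_2|x_2)$. Fix a B-DMC $W$. For every finite string $\mathbf t=(t_1,\dots,t_n)\in\{+,-,\bigstar\}^n$, $n\ge0$, define a B-DMC $W_{\mathbf t}$ recursively: $W_{\emptyset}=W$ for the empty string; for $n\ge1$ let $\mathbf t'=(t_1,\dots,t_{n-1})$ and $\mathbf t''=(t_1,\dots,t_{n-m})$ (the empty string if $n\le m$); then $W_{\mathbf t}=W_{\mathbf t''}\boxplus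 W_{\mathbf t'}$ if $t_n=+$, $W_{\mathbf t}=W_{\mathbf t''}\boxminus W_{\mathbf t'}$ if $t_n=-$, and $W_{\mathbf t}=W_{\mathbf t'}$ if $t_n=\bigstar$. *)

(* Defs.v *)
From Stdlib Require Import Reals List Arith.
Import ListNotations.
Open Scope R_scope.

(* A B-DMC with input {0,1} and finite output alphabet {0,..,k-1} is
   represented by the list of its output columns: the y-th entry is
   the pair (V(y|0), V(y|1)). *)
Definition chan := list (R * R).

Definition valid_chan (V : chan) : Prop :=
  Forall (fun p => 0 <= fst p /\ 0 <= snd p) V /\
  fold_right Rplus 0 (map fst V) = 1 /\
  fold_right Rplus 0 (map snd V) = 1.

Definition log2 (x : R) : R := ln x / ln 2.

Definition Zb (V : chan) : R :=
  fold_right Rplus 0 (map (fun p => sqrt (fst p * snd p)) V).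

Definition Jc (V : chan) : R := log2 (2 / (1 + Zb V)).

(* V' ⊟ V'' : output (y1,y2), input x1:
   (y1,y2|x1) = sum_{x2} 1/2 V'(y1|x1 xor x2) V''(y2|x2) *)
Definition boxminus (V1 V2 : chan) : chan :=
  flat_map (fun a =>
    map (fun b =>
      (/2 * (fst a * fst b + snd a * snd b),
       /2 * (snd a * fst b + fst a * snd b))) V2) V1.

(* V' ⊞ V'' : output (y1,y2,x1), input x2:
   (y1,y2,x1|x2) = 1/2 V'(y1|x1 xor x2) V''(y2|x2) *)
Definition boxplus (V1 V2 : chan) : chan :=
  flat_map (fun a =>
    flat_map (fun b =>
      [ (/2 * (fst a * fst b), /2 * (snd a * snd b))      (* x1 = 0 *)
      ; (/2 * (snd a * fst b), /2 * (fst a * snd b)) ]    (* x1 = 1 *)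
    ) V2) V1.

Inductive sign := Plus | Minus | Star.

(* W_t, defined by recursion on the length of t (fuel = length t):
   t' = t without its last symbol, t'' = first (n-m) symbols
   (empty if n <= m, via truncated subtraction). *)
Fixpoint Wfuel (m : nat) (W : chan) (fuel : nat) (t : list sign) : chan :=
  match fuel with
  | O => W
  | S f =>
    match t with
    | [] => W
    | _ =>
      let t' := removelast t in
      let t'' := firstn (length t - m)%nat t in
      match last t Star with
      | Plus => boxplus (Wfuel m W f t'') (Wfuel m W f t')
      | Minus => boxminus (Wfuel m W f t'') (Wfuel m W f t')
      | Star => Wfuel m W f t'
      end
    end
  end.

Definition Wt (m : nat) (W : chan) (t : list sign) : chan :=
  Wfuel m W (length t) t.

(* N(n), n : nat; N(n) = 1 for n <= 0 is encoded by truncated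
   subtraction: N(n-m) with n <= m is N 0 = 1. *)
Fixpoint Nfuel (m : nat) (fuel n : nat) : nat :=
  match fuel with
  | O => 1
  | S f =>
    match n with
    | O => 1
    | S k => (Nfuel m f k + Nfuel m f (S k - m))%nat
    end
  end.

Definition NN (m n : nat) : nat := Nfuel m n n.

(* The list [s_n^(1); ...; s_n^(N(n))] of the recursively defined
   vectors; S_n is the set of its elements. *)
Fixpoint Sseq (m n : nat) : list (list sign) :=
  match n with
  | O => [ [] ]
  | S k =>
    let p := Sseq m k in
    let c := NN m (S k - m) in
    map (fun s => s ++ [Plus]) (firstn c p) ++
    map (fun s => s ++ [Star]) (skipn c p) ++
    map (fun s => s ++ [Minus]) (firstn c p)
  end.

(* E[J_n]; E[J_n] = J(W) for n <= 0 (here: n = 0, with n-m truncated). *)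
Definition EJ (m : nat) (W : chan) (n : nat) : R :=
  match n with
  | O => Jc W
  | _ => / INR (NN m n) *
         fold_right Rplus 0 (map (fun s => Jc (Wt m W s)) (Sseq m n))
  end.

(* Main.v *)
Require Import Defs.
From Stdlib Require Import Reals List Arith Lra Lia.
Import ListNotations.
Open Scope R_scope.

Notation sumR := (fold_right Rplus 0).

Lemma sumR_app l1 l2 : sumR (l1 ++ l2) = sumR l1 + sumR l2.
Proof. induction l1; simpl; [ring| rewrite IHl1; ring]. Qed.

Lemma sum_flat {A B} (f : B -> R) (g : A -> list B) l :
  sumR (map f (flat_map g l)) = sumR (map (fun a => sumR (map f (g a))) l).
Proof. induction l; simpl; auto. rewrite map_app, sumR_app, IHl; auto. Qed.

Lemma sum_ext_in {A} (f g : A -> R) l :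
  (forall x, In x l -> f x = g x) -> sumR (map f l) = sumR (map g l).
Proof. intros H; f_equal; apply map_ext_in; auto. Qed.

Lemma sum_le_in {A} (f g : A -> R) l :
  (forall x, In x l -> f x <= g x) -> sumR (map f l) <= sumR (map g l).
Proof.
  induction l; simpl; intros H; [lra|].
  specialize (IHl (fun x Hx => H x (or_intror Hx))).
  specialize (H a (or_introl eq_refl)). lra.
Qed.

Lemma sum_nonneg {A} (f : A -> R) l :
  (forall x, In x l -> 0 <= f x) -> 0 <= sumR (map f l).
Proof.
  induction l; simpl; intros H; [lra|].
  specialize (IHl (fun x Hx => H x (or_intror Hx))).
  specialize (H a (or_introl eq_refl)). lra.
Qed.

Lemma sum_zero {A} (f : A -> R) l :
  (forall x, In x l -> 0 <= f x) -> sumR (map f l) = 0 ->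
  forall x, In x l -> f x = 0.
Proof.
  induction l; simpl; intros H Hs x Hx; [contradiction|].
  assert (0 <= f a) by auto.
  assert (0 <= sumR (map f l)) by (apply sum_nonneg; auto).
  destruct Hx as [<-|Hx]; [lra|]. apply IHl; auto; lra.
Qed.

Lemma sum_lin3 {A} (f g1 g2 g3 : A -> R) c1 c2 c3 l :
  (forall x, In x l -> f x = c1 * g1 x + c2 * g2 x + c3 * g3 x) ->
  sumR (map f l) = c1 * sumR (map g1 l) + c2 * sumR (map g2 l) + c3 * sumR (map g3 l).
Proof.
  induction l; simpl; intros H; [ring|].
  rewrite IHl by auto. rewrite H by auto. ring.
Qed.

Lemma sum_lin4 {A} (f g h k : A -> R) l :
  sumR (map (fun x => f x + g x - h x - k x) l) =
  sumR (map f l) + sumR (map g l) - sumR (map h l) - sumR (map k l).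
Proof. induction l; simpl; [ring|]. rewrite IHl. ring. Qed.

Lemma sqrt_le_sq X Y : 0 <= Y -> X <= Y * Y -> sqrt X <= Y.
Proof. intros HY H. rewrite <- (sqrt_square Y HY). apply sqrt_le_1_alt; auto. Qed.

Lemma sqrt_eq_sq X c : 0 <= c -> c * c = X -> sqrt X = c.
Proof. intros Hc <-. apply sqrt_square; auto. Qed.

Lemma amgm x y : 0 <= x -> 0 <= y -> sqrt (x * y) <= /2 * x + /2 * y.
Proof. intros. apply sqrt_le_sq; [lra|]. assert (0 <= (x-y)*(x-y)) by apply Rle_0_sqr. nra. Qed.

Lemma minus_core a d b g : 0<=a->0<=d->0<=b->0<=g->
  sqrt (/2*(a*a*(b*b) + d*d*(g*g)) * (/2*(d*d*(b*b) + a*a*(g*g)))) <=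
  /2*((a*a+d*d)*(b*g) + (b*b+g*g)*(a*d)) - (a*d)*(b*g).
Proof.
  intros. apply sqrt_le_sq.
  - assert (0 <= (a-d)*(a-d)*(b*g)) by (apply Rmult_le_pos; [apply Rle_0_sqr| apply Rmult_le_pos; auto]).
    assert (0 <= (b-g)*(b-g)*(a*d)) by (apply Rmult_le_pos; [apply Rle_0_sqr| apply Rmult_le_pos; auto]).
    assert (0 <= (a*d)*(b*g)) by (apply Rmult_le_pos; apply Rmult_le_pos; auto).
    assert (HE: /2*((a*a+d*d)*(b*g) + (b*b+g*g)*(a*d)) - (a*d)*(b*g) =
      /2 * ((a-d)*(a-d)*(b*g)) + /2*((b-g)*(b-g)*(a*d)) + (a*d)*(b*g)) by field.
    rewrite HE. lra.
  - match goal with |- ?X <= ?Y * ?Y =>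
      assert (HE: Y*Y - X = /2 * ((a*d)*(b*g)) * (((a-d)*(b-g))*((a-d)*(b-g)))) by field end.
    assert (0 <= (a*d)*(b*g)) by (apply Rmult_le_pos; apply Rmult_le_pos; auto).
    assert (0 <= ((a-d)*(b-g))*((a-d)*(b-g))) by apply Rle_0_sqr.
    assert (0 <= /2 * ((a*d)*(b*g)) * (((a-d)*(b-g))*((a-d)*(b-g)))).
    { apply Rmult_le_pos; [apply Rmult_le_pos|]; lra. }
    lra.
Qed.

Lemma minus_term al de be ga : 0<=al->0<=de->0<=be->0<=ga->
  sqrt (/2*(al*be + de*ga) * (/2*(de*be + al*ga))) <=
  /2*((al+de)*sqrt(be*ga) + (be+ga)*sqrt(al*de)) - sqrt(al*de)*sqrt(be*ga).
Proof.
  intros H1 H2 H3 H4.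
  rewrite (sqrt_mult al de), (sqrt_mult be ga) by auto.
  assert (Ha : al = sqrt al * sqrt al) by (symmetry; apply sqrt_sqrt; auto).
  assert (Hd : de = sqrt de * sqrt de) by (symmetry; apply sqrt_sqrt; auto).
  assert (Hb : be = sqrt be * sqrt be) by (symmetry; apply sqrt_sqrt; auto).
  assert (Hg : ga = sqrt ga * sqrt ga) by (symmetry; apply sqrt_sqrt; auto).
  pose proof (sqrt_pos al). pose proof (sqrt_pos de).
  pose proof (sqrt_pos be). pose proof (sqrt_pos ga).
  set (a := sqrt al) in *. set (d := sqrt de) in *.
  set (b := sqrt be) in *. set (g := sqrt ga) in *.
  rewrite Ha, Hd, Hb, Hg.
  apply minus_core; auto.
Qed.

Lemma plus_term al de be ga : 0<=al->0<=de->0<=be->0<=ga->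
  sqrt (/2*(al*be) * (/2*(de*ga))) + (sqrt (/2*(de*be) * (/2*(al*ga))) + 0)
  = sqrt (al*de) * sqrt (be*ga).
Proof.
  intros.
  assert (E1: sqrt (al*de) * sqrt (al*de) = al*de) by (apply sqrt_sqrt; apply Rmult_le_pos; auto).
  assert (E2: sqrt (be*ga) * sqrt (be*ga) = be*ga) by (apply sqrt_sqrt; apply Rmult_le_pos; auto).
  pose proof (sqrt_pos (al*de)). pose proof (sqrt_pos (be*ga)).
  rewrite (sqrt_eq_sq (/2*(al*be) * (/2*(de*ga))) (/2*(sqrt(al*de)*sqrt(be*ga)))).
  2: { apply Rmult_le_pos; [lra| apply Rmult_le_pos; auto]. }
  2: { transitivity (/2*/2*((sqrt(al*de)*sqrt(al*de))*(sqrt(be*ga)*sqrt(be*ga)))); [ring| rewrite E1, E2; ring]. }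
  rewrite (sqrt_eq_sq (/2*(de*be) * (/2*(al*ga))) (/2*(sqrt(al*de)*sqrt(be*ga)))).
  2: { apply Rmult_le_pos; [lra| apply Rmult_le_pos; auto]. }
  2: { transitivity (/2*/2*((sqrt(al*de)*sqrt(al*de))*(sqrt(be*ga)*sqrt(be*ga)))); [ring| rewrite E1, E2; ring]. }
  field.
Qed.

Lemma Zb_nonneg V : 0 <= Zb V.
Proof. unfold Zb. apply sum_nonneg; intros; apply sqrt_pos. Qed.

Lemma Zb_le1 V : valid_chan V -> Zb V <= 1.
Proof.
  intros [HF [H0 H1]]. rewrite Forall_forall in HF. unfold Zb.
  eapply Rle_trans.
  - apply (sum_le_in _ (fun p => /2 * fst p + /2 * snd p)).
    intros x Hx; destruct (HF x Hx); apply amgm; auto.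
  - rewrite (sum_lin3 _ fst snd (fun _ => 0) (/2) (/2) 0) by (intros; ring).
    rewrite H0, H1. lra.
Qed.

Lemma plus_valid V1 V2 : valid_chan V1 -> valid_chan V2 -> valid_chan (boxplus V1 V2).
Proof.
  intros [F1 [A0 A1]] [F2 [B0 B1]]. rewrite Forall_forall in F1, F2.
  split; [|split].
  - rewrite Forall_forall. intros x Hx. unfold boxplus in Hx.
    apply in_flat_map in Hx as [a [Ha Hx]]. apply in_flat_map in Hx as [b [Hb Hx]].
    destruct (F1 a Ha), (F2 b Hb).
    destruct Hx as [<-|[<-|[]]]; cbn [fst snd]; split;
      repeat apply Rmult_le_pos; auto; lra.
  - unfold boxplus. rewrite sum_flat.
    rewrite (sum_lin3 _ fst snd (fun _ => 0) (/2) (/2) 0). { rewrite A0, A1. lra. }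
    intros a Ha. rewrite sum_flat. cbn [map fold_right fst snd].
    rewrite (sum_lin3 _ fst snd (fun _ => 0) (/2*(fst a + snd a)) 0 0) by (intros; ring).
    rewrite B0. ring.
  - unfold boxplus. rewrite sum_flat.
    rewrite (sum_lin3 _ fst snd (fun _ => 0) (/2) (/2) 0). { rewrite A0, A1. lra. }
    intros a Ha. rewrite sum_flat. cbn [map fold_right fst snd].
    rewrite (sum_lin3 _ fst snd (fun _ => 0) 0 (/2*(fst a + snd a)) 0) by (intros; ring).
    rewrite B1. ring.
Qed.

Lemma minus_valid V1 V2 : valid_chan V1 -> valid_chan V2 -> valid_chan (boxminus V1 V2).
Proof.
  intros [F1 [A0 A1]] [F2 [B0 B1]]. rewrite Forall_forall in F1, F2.
  split; [|split].
  - rewrite Forall_forall. intros x Hx. unfold boxminus in Hx.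
    apply in_flat_map in Hx as [a [Ha Hx]]. apply in_map_iff in Hx as [b [<- Hb]].
    destruct (F1 a Ha), (F2 b Hb).
    cbn [fst snd]; split; apply Rmult_le_pos; try lra;
      apply Rplus_le_le_0_compat; apply Rmult_le_pos; auto.
  - unfold boxminus. rewrite sum_flat.
    rewrite (sum_lin3 _ fst snd (fun _ => 0) (/2) (/2) 0). { rewrite A0, A1. lra. }
    intros a Ha. rewrite map_map. cbn [fst snd].
    rewrite (sum_lin3 _ fst snd (fun _ => 0) (/2*fst a) (/2*snd a) 0) by (intros; cbn beta; ring).
    rewrite B0, B1. ring.
  - unfold boxminus. rewrite sum_flat.
    rewrite (sum_lin3 _ fst snd (fun _ => 0) (/2) (/2) 0). { rewrite A0, A1. lra. }
    intros a Ha. rewrite map_map. cbn [fst snd].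
    rewrite (sum_lin3 _ fst snd (fun _ => 0) (/2*snd a) (/2*fst a) 0) by (intros; cbn beta; ring).
    rewrite B0, B1. ring.
Qed.

Lemma Zb_plus V1 V2 : valid_chan V1 -> valid_chan V2 -> Zb (boxplus V1 V2) = Zb V1 * Zb V2.
Proof.
  intros [F1 _] [F2 _]. rewrite Forall_forall in F1, F2.
  unfold Zb at 1, boxplus. rewrite sum_flat.
  rewrite (sum_lin3 _ (fun p => sqrt (fst p * snd p)) (fun _ => 0) (fun _ => 0) (Zb V2) 0 0).
  { unfold Zb. ring. }
  intros a Ha. rewrite sum_flat. cbn [map fold_right fst snd].
  rewrite (sum_lin3 _ (fun p => sqrt (fst p * snd p)) (fun _ => 0) (fun _ => 0) (sqrt (fst a * snd a)) 0 0).
  { unfold Zb. ring. }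
  intros b Hb. destruct (F1 a Ha), (F2 b Hb).
  destruct a as [al de], b as [be ga]. cbn [fst snd] in *.
  rewrite plus_term by auto. ring.
Qed.

Lemma Zb_minus V1 V2 : valid_chan V1 -> valid_chan V2 ->
  Zb (boxminus V1 V2) <= Zb V1 + Zb V2 - Zb V1 * Zb V2.
Proof.
  intros [F1 [A0 A1]] [F2 [B0 B1]]. rewrite Forall_forall in F1, F2.
  unfold Zb at 1, boxminus. rewrite sum_flat.
  eapply Rle_trans.
  - apply (sum_le_in _ (fun a => (1 - Zb V2) * sqrt(fst a*snd a) + (/2 * Zb V2) * fst a + (/2*Zb V2) * snd a)).
    intros a Ha. rewrite map_map.
    eapply Rle_trans.
    + apply (sum_le_in _ (fun b => (/2*(fst a+snd a) - sqrt(fst a*snd a)) * sqrt(fst b*snd b)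
          + (/2*sqrt(fst a*snd a)) * fst b + (/2*sqrt(fst a*snd a))*snd b)).
      intros b Hb. destruct (F1 a Ha), (F2 b Hb).
      destruct a as [al de], b as [be ga]. cbn [fst snd] in *.
      eapply Rle_trans; [apply minus_term; auto| right; field].
    + rewrite (sum_lin3 _ (fun p => sqrt (fst p * snd p)) fst snd (/2*(fst a+snd a) - sqrt(fst a*snd a)) (/2*sqrt(fst a*snd a)) (/2*sqrt(fst a*snd a))) by (intros; reflexivity).
      rewrite B0, B1. unfold Zb. right; field.
  - rewrite (sum_lin3 _ (fun p => sqrt (fst p * snd p)) fst snd (1 - Zb V2) (/2 * Zb V2) (/2 * Zb V2)) by (intros; reflexivity).
    rewrite A0, A1. unfold Zb. right; field.
Qed.

Lemma ln2_pos : 0 < ln 2.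
Proof. pose proof ln_lt_2. lra. Qed.

Lemma Jc_eq V : Jc V = 1 - ln (1 + Zb V) / ln 2.
Proof.
  pose proof (Zb_nonneg V). pose proof ln2_pos.
  unfold Jc, log2. change (2 / (1 + Zb V)) with (2 * / (1 + Zb V)). rewrite ln_mult by (try apply Rinv_0_lt_compat; lra).
  rewrite ln_Rinv by lra. field. lra.
Qed.

Lemma J01 V : Zb V = 0 \/ Zb V = 1 -> Jc V = 0 \/ Jc V = 1.
Proof.
  pose proof ln2_pos. rewrite Jc_eq. intros [H0|H0]; rewrite H0.
  - right. rewrite Rplus_0_r, ln_1. field. lra.
  - left. replace (1+1) with 2 by ring. field. lra.
Qed.

Lemma pairJ V1 V2 : valid_chan V1 -> valid_chan V2 ->
  0 <= Jc (boxplus V1 V2) + Jc (boxminus V1 V2) - Jc V1 - Jc V2 /\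
  (Jc (boxplus V1 V2) + Jc (boxminus V1 V2) - Jc V1 - Jc V2 = 0 ->
   (Jc V1 = 0 \/ Jc V1 = 1) \/ (Jc V2 = 0 \/ Jc V2 = 1)).
Proof.
  intros H1 H2.
  pose proof (Zb_nonneg V1) as Ha0. pose proof (Zb_le1 V1 H1) as Ha1.
  pose proof (Zb_nonneg V2) as Hb0. pose proof (Zb_le1 V2 H2) as Hb1.
  pose proof (Zb_nonneg (boxminus V1 V2)) as Hm0. pose proof (Zb_minus V1 V2 H1 H2) as Hm1.
  pose proof (Zb_plus V1 V2 H1 H2) as Hp.
  pose proof ln2_pos as Hl.
  rewrite !Jc_eq. rewrite Hp.
  set (a := Zb V1) in *. set (b := Zb V2) in *. set (z := Zb (boxminus V1 V2)) in *.
  set (P := (1 + a*b) * (1 + z)). set (Q := (1+a)*(1+b)).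
  assert (HP : 0 < P) by (unfold P; apply Rmult_lt_0_compat; [pose proof (Rmult_le_pos a b Ha0 Hb0)|]; lra).
  assert (HK : 1 - ln (1 + a * b) / ln 2 + (1 - ln (1 + z) / ln 2) - (1 - ln (1 + a) / ln 2) -
    (1 - ln (1 + b) / ln 2) = (ln Q - ln P) / ln 2).
  { pose proof (Rmult_le_pos a b Ha0 Hb0). unfold P, Q. rewrite !ln_mult by lra.
    field. lra. }
  rewrite HK.
  assert (Hab : 0 <= a * b) by (apply Rmult_le_pos; auto).
  assert (HPQ : P <= Q - a*b*((1-a)*(1-b))).
  { unfold P, Q.
    assert ((1 + a*b) * (1 + z) <= (1 + a*b) * (1 + (a+b-a*b))) by
      (apply Rmult_le_compat_l; lra).
    eapply Rle_trans; [exact H|]. right; field. }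
  assert (H01 : 0 <= a*b*((1-a)*(1-b))) by (apply Rmult_le_pos; auto; apply Rmult_le_pos; lra).
  assert (HlnPQ : ln P <= ln Q).
  { destruct (Rle_lt_or_eq_dec P Q) as [Hlt|Heq]; [lra| left; apply ln_increasing; auto| right; rewrite Heq; auto]. }
  split.
  - unfold Rdiv. apply Rmult_le_pos; [lra| left; apply Rinv_0_lt_compat; auto].
  - intros HD.
    assert (HK0 : ln Q - ln P = 0).
    { apply (Rmult_eq_reg_r (/ ln 2)); [| apply Rinv_neq_0_compat; lra]. rewrite Rmult_0_l. exact HD. }
    destruct (Req_dec a 0) as [E|E]; [left; pose proof (J01 V1 (or_introl E)) as HJ; rewrite Jc_eq in HJ; exact HJ|].
    destruct (Req_dec a 1) as [E'|E']; [left; pose proof (J01 V1 (or_intror E')) as HJ; rewrite Jc_eq in HJ; exact HJ|].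
    destruct (Req_dec b 0) as [F|F]; [right; pose proof (J01 V2 (or_introl F)) as HJ; rewrite Jc_eq in HJ; exact HJ|].
    destruct (Req_dec b 1) as [F'|F']; [right; pose proof (J01 V2 (or_intror F')) as HJ; rewrite Jc_eq in HJ; exact HJ|].
    exfalso.
    assert (0 < a*b*((1-a)*(1-b))).
    { apply Rmult_lt_0_compat; [apply Rmult_lt_0_compat; lra| apply Rmult_lt_0_compat; lra]. }
    assert (ln P < ln Q) by (apply ln_increasing; auto; lra).
    lra.
Qed.

Lemma Nfuel_pos m f n : (1 <= Nfuel m f n)%nat.
Proof. revert n; induction f; intros [|n]; simpl; auto. pose proof (IHf n). lia. Qed.

Lemma Nfuel_indep m : (1 <= m)%nat -> forall f1 f2 n, (n <= f1)%nat -> (n <= f2)%nat ->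
  Nfuel m f1 n = Nfuel m f2 n.
Proof.
  intros Hm. induction f1; intros f2 n H1 H2.
  - assert (n = 0)%nat by lia; subst. destruct f2; reflexivity.
  - destruct f2.
    + assert (n = 0)%nat by lia; subst; reflexivity.
    + destruct n; [reflexivity|].
      change (Nfuel m (S f1) (S n)) with (Nfuel m f1 n + Nfuel m f1 (S n - m))%nat.
      change (Nfuel m (S f2) (S n)) with (Nfuel m f2 n + Nfuel m f2 (S n - m))%nat.
      rewrite (IHf1 f2 n) by lia. rewrite (IHf1 f2 (S n - m)%nat) by lia. reflexivity.
Qed.

Lemma NN_S m k : (1 <= m)%nat -> NN m (S k) = (NN m k + NN m (S k - m))%nat.
Proof.
  intros Hm. unfold NN.
  change (Nfuel m (S k) (S k)) with (Nfuel m k k + Nfuel m k (S k - m))%nat.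
  rewrite (Nfuel_indep m Hm k (S k - m) (S k - m)) by lia. reflexivity.
Qed.

Lemma NN_pos m k : (1 <= NN m k)%nat.
Proof. apply Nfuel_pos. Qed.

Lemma NN_mono m j k : (1 <= m)%nat -> (j <= k)%nat -> (NN m j <= NN m k)%nat.
Proof.
  intros Hm H. induction H; [lia|]. rewrite NN_S by auto. lia.
Qed.

Lemma Sseq_S m k : Sseq m (S k) =
  map (fun s => s ++ [Plus]) (firstn (NN m (S k - m)) (Sseq m k)) ++
  map (fun s => s ++ [Star]) (skipn (NN m (S k - m)) (Sseq m k)) ++
  map (fun s => s ++ [Minus]) (firstn (NN m (S k - m)) (Sseq m k)).
Proof. reflexivity. Qed.

Lemma Sseq_len m k : (1 <= m)%nat -> length (Sseq m k) = NN m k.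
Proof.
  intros Hm. induction k; [reflexivity|].
  rewrite Sseq_S, !length_app, !length_map, !length_firstn, length_skipn, IHk, NN_S by auto.
  pose proof (NN_mono m (S k - m) k Hm ltac:(lia)). lia.
Qed.

Lemma In_firstn' {A} (x : A) n l : In x (firstn n l) -> In x l.
Proof. intros H. rewrite <- (firstn_skipn n l). apply in_or_app; auto. Qed.
Lemma In_skipn' {A} (x : A) n l : In x (skipn n l) -> In x l.
Proof. intros H. rewrite <- (firstn_skipn n l). apply in_or_app; auto. Qed.

Lemma Sseq_elem_len m k s : In s (Sseq m k) -> length s = k.
Proof.
  revert s; induction k; intros s H.
  - destruct H as [<-|[]]; reflexivity.
  - rewrite Sseq_S in H.
    apply in_app_or in H as [H|H]; [|apply in_app_or in H as [H|H]];
      apply in_map_iff in H as [s0 [<- H0]];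
      rewrite length_app; simpl;
      rewrite (IHk s0); try lia;
      eauto using In_firstn', In_skipn'.
Qed.

Lemma firstn_app_short {A} j (s : list A) x : (j <= length s)%nat -> firstn j (s ++ [x]) = firstn j s.
Proof.
  intros H. rewrite firstn_app. replace (j - length s)%nat with 0%nat by lia.
  simpl. apply app_nil_r.
Qed.

Lemma prefix m j d : (1 <= m)%nat ->
  firstn (NN m j) (map (firstn j) (Sseq m (j + d))) = Sseq m j.
Proof.
  intros Hm. induction d.
  - rewrite Nat.add_0_r.
    rewrite (map_ext_in _ (fun s => s)).
    + rewrite map_id, <- (Sseq_len m j Hm), firstn_all. reflexivity.
    + intros s Hs. rewrite <- (Sseq_elem_len m j s Hs) at 1. apply firstn_all.
  - rewrite Nat.add_succ_r, Sseq_S.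
    set (p := Sseq m (j + d)). set (c := NN m (S (j + d) - m)).
    assert (Hp : forall s, In s p -> length s = (j + d)%nat) by (intros; eapply Sseq_elem_len; eauto).
    rewrite !map_app, !map_map.
    rewrite (map_ext_in (fun x => firstn j (x ++ [Plus])) (firstn j)).
    2: { intros s Hs. apply firstn_app_short. rewrite (Hp s) by eauto using In_firstn'. lia. }
    rewrite (map_ext_in (fun x => firstn j (x ++ [Star])) (firstn j)).
    2: { intros s Hs. apply firstn_app_short. rewrite (Hp s) by eauto using In_skipn'. lia. }
    rewrite app_assoc, <- map_app, firstn_skipn.
    rewrite firstn_app.
    assert (NN m j <= length (map (firstn j) p))%nat.
    { rewrite length_map. unfold p. rewrite Sseq_len by auto. apply NN_mono; auto; lia. }
    replace (NN m j - length (map (firstn j) p))%nat with 0%nat by lia.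
    simpl. rewrite app_nil_r. exact IHd.
Qed.

Lemma Wfuel_S m W f t : t <> [] -> Wfuel m W (S f) t =
  match last t Star with
  | Plus => boxplus (Wfuel m W f (firstn (length t - m) t)) (Wfuel m W f (removelast t))
  | Minus => boxminus (Wfuel m W f (firstn (length t - m) t)) (Wfuel m W f (removelast t))
  | Star => Wfuel m W f (removelast t)
  end.
Proof. destruct t; [congruence| reflexivity]. Qed.

Lemma removelast_len {A} (l : list A) : length (removelast l) = (length l - 1)%nat.
Proof. rewrite removelast_firstn_len, length_firstn. lia. Qed.

Lemma Wfuel_indep m W : (1 <= m)%nat -> forall f1 f2 t, (length t <= f1)%nat -> (length t <= f2)%nat ->
  Wfuel m W f1 t = Wfuel m W f2 t.
Proof.
  intros Hm. induction f1; intros f2 t H1 H2.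
  - destruct t; [|simpl in H1; lia]. destruct f2; reflexivity.
  - destruct f2.
    + destruct t; [reflexivity| simpl in H2; lia].
    + destruct t as [|x t']; [reflexivity|].
      rewrite !Wfuel_S by discriminate.
      assert (Hr : (length (removelast (x :: t')) <= f1)%nat /\ (length (removelast (x :: t')) <= f2)%nat)
        by (rewrite removelast_len; change (length (x :: t')) with (S (length t')) in *; lia).
      assert (Hf : (length (firstn (length (x :: t') - m) (x :: t')) <= f1)%nat /\
                   (length (firstn (length (x :: t') - m) (x :: t')) <= f2)%nat)
        by (rewrite length_firstn; change (length (x :: t')) with (S (length t')) in *; lia).
      rewrite (IHf1 f2 (removelast (x :: t'))) by tauto.
      rewrite (IHf1 f2 (firstn (length (x :: t') - m) (x :: t'))) by tauto.
      reflexivity.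
Qed.

Lemma Wt_app m W s x : (1 <= m)%nat -> Wt m W (s ++ [x]) =
  match x with
  | Plus => boxplus (Wt m W (firstn (S (length s) - m) s)) (Wt m W s)
  | Minus => boxminus (Wt m W (firstn (S (length s) - m) s)) (Wt m W s)
  | Star => Wt m W s
  end.
Proof.
  intros Hm. unfold Wt at 1.
  assert (HL : length (s ++ [x]) = S (length s)) by (rewrite length_app; simpl; lia).
  rewrite HL. rewrite Wfuel_S by (destruct s; discriminate).
  rewrite HL, last_last, removelast_last, firstn_app_short by lia.
  assert (HF : Wfuel m W (length s) (firstn (S (length s) - m) s) = Wt m W (firstn (S (length s) - m) s)).
  { unfold Wt. apply Wfuel_indep; auto. rewrite length_firstn. lia. }
  destruct x; rewrite ?HF; reflexivity.
Qed.

Lemma Wfuel_valid m W : valid_chan W -> forall f t, valid_chan (Wfuel m W f t).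
Proof.
  intros HW. induction f; intros t; [exact HW|].
  destruct t; [exact HW|]. rewrite Wfuel_S by discriminate.
  destruct (last _ _); auto using plus_valid, minus_valid.
Qed.

Lemma Wt_valid m W t : valid_chan W -> valid_chan (Wt m W t).
Proof. intros; apply Wfuel_valid; auto. Qed.

Lemma sum_EJ m W k : (1 <= m)%nat ->
  sumR (map (fun s => Jc (Wt m W s)) (Sseq m k)) = INR (NN m k) * EJ m W k.
Proof.
  intros Hm. destruct k.
  - simpl. change (Wt m W []) with W. ring.
  - change (EJ m W (S k)) with (/ INR (NN m (S k)) * sumR (map (fun s => Jc (Wt m W s)) (Sseq m (S k)))).
    field. apply not_0_INR. pose proof (NN_pos m (S k)). lia.
Qed.

Theorem lemma1 (m : nat) (W : chan) (n : nat) :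
  (1 <= m)%nat -> valid_chan W -> (1 <= n)%nat ->
  let mu := INR (NN m (n - 1)) / INR (NN m n) in
  EJ m W n >= mu * EJ m W (n - 1) + (1 - mu) * EJ m W (n - m) /\
  (EJ m W n = mu * EJ m W (n - 1) + (1 - mu) * EJ m W (n - m) ->
   forall s : list sign, In s (Sseq m n) ->
     (last s Star = Plus \/ last s Star = Minus) ->
     (Jc (Wt m W (removelast s)) = 0 \/ Jc (Wt m W (removelast s)) = 1) \/
     (Jc (Wt m W (firstn (n - m) s)) = 0 \/ Jc (Wt m W (firstn (n - m) s)) = 1)).
Proof.
  intros Hm HW Hn. destruct n as [|n]; [lia|].
  replace (S n - 1)%nat with n by lia. cbv zeta.
  set (j := (S n - m)%nat).
  set (c := NN m j).
  set (p := Sseq m n).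
  set (D := fun s => Jc (boxplus (Wt m W (firstn j s)) (Wt m W s)) +
                     Jc (boxminus (Wt m W (firstn j s)) (Wt m W s)) -
                     Jc (Wt m W (firstn j s)) - Jc (Wt m W s)).
  assert (Hlen : forall s, In s p -> length s = n) by (intros; eapply Sseq_elem_len; eauto).
  assert (HD : forall s, 0 <= D s /\ (D s = 0 ->
     (Jc (Wt m W (firstn j s)) = 0 \/ Jc (Wt m W (firstn j s)) = 1) \/
     (Jc (Wt m W s) = 0 \/ Jc (Wt m W s) = 1))).
  { intros s. unfold D. apply pairJ; apply Wt_valid; auto. }
  assert (HP : Sseq m j = firstn c (map (firstn j) p)).
  { unfold c, p. rewrite <- (prefix m j (n - j)) by auto.
    replace (j + (n - j))%nat with n by (unfold j; lia). reflexivity. }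
  assert (Key : INR (NN m (S n)) * EJ m W (S n) =
     INR (NN m n) * EJ m W n + INR (NN m j) * EJ m W j + sumR (map D (firstn c p))).
  { rewrite <- !sum_EJ by auto. rewrite Sseq_S. fold j c p.
    rewrite !map_app, !sumR_app, !map_map.
    rewrite (sum_ext_in (fun x => Jc (Wt m W (x ++ [Plus])))
               (fun s => Jc (boxplus (Wt m W (firstn j s)) (Wt m W s)))).
    2: { intros s Hs. rewrite Wt_app by auto. rewrite Hlen by eauto using In_firstn'. reflexivity. }
    rewrite (sum_ext_in (fun x => Jc (Wt m W (x ++ [Minus])))
               (fun s => Jc (boxminus (Wt m W (firstn j s)) (Wt m W s)))).
    2: { intros s Hs. rewrite Wt_app by auto. rewrite Hlen by eauto using In_firstn'. reflexivity. }
    rewrite (sum_ext_in (fun x => Jc (Wt m W (x ++ [Star])))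
               (fun s => Jc (Wt m W s))).
    2: { intros s Hs. rewrite Wt_app by auto. reflexivity. }
    rewrite HP, firstn_map, map_map.
    assert (Hsplit : sumR (map (fun s => Jc (Wt m W s)) p) =
       sumR (map (fun s => Jc (Wt m W s)) (firstn c p)) + sumR (map (fun s => Jc (Wt m W s)) (skipn c p))).
    { rewrite <- sumR_app, <- map_app, firstn_skipn. reflexivity. }
    rewrite Hsplit. unfold D.
    rewrite (sum_lin4 (fun s => Jc (boxplus (Wt m W (firstn j s)) (Wt m W s)))
                      (fun s => Jc (boxminus (Wt m W (firstn j s)) (Wt m W s)))
                      (fun s => Jc (Wt m W (firstn j s)))
                      (fun s => Jc (Wt m W s))).
    lra. }
  assert (HN : INR (NN m (S n)) = INR (NN m n) + INR (NN m j)) by (rewrite NN_S, plus_INR; auto).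
  assert (Npos : 0 < INR (NN m (S n))) by (apply lt_0_INR; pose proof (NN_pos m (S n)); lia).
  assert (SDpos : 0 <= sumR (map D (firstn c p))) by (apply sum_nonneg; intros; apply HD).
  assert (EQ : EJ m W (S n) = INR (NN m n) / INR (NN m (S n)) * EJ m W n +
      (1 - INR (NN m n) / INR (NN m (S n))) * EJ m W j + sumR (map D (firstn c p)) / INR (NN m (S n))).
  { apply (Rmult_eq_reg_l (INR (NN m (S n)))); [|lra].
    rewrite Key. rewrite HN. field. rewrite <- HN. lra. }
  assert (Q0 : 0 <= sumR (map D (firstn c p)) / INR (NN m (S n))).
  { unfold Rdiv. apply Rmult_le_pos; [lra| left; apply Rinv_0_lt_compat; lra]. }
  split.
  - rewrite EQ at 1. lra.
  - intros Heq.
    assert (Q1 : sumR (map D (firstn c p)) / INR (NN m (S n)) = 0) by lra.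
    assert (SD0 : sumR (map D (firstn c p)) = 0).
    { replace (sumR (map D (firstn c p))) with
        (sumR (map D (firstn c p)) / INR (NN m (S n)) * INR (NN m (S n))) by (field; lra).
      rewrite Q1. ring. }
    assert (Dz : forall s, In s (firstn c p) -> D s = 0).
    { apply sum_zero; auto. intros; apply HD. }
    intros s Hs Hlast. rewrite Sseq_S in Hs. fold j c p in Hs.
    apply in_app_or in Hs as [Hs|Hs]; [|apply in_app_or in Hs as [Hs|Hs]];
      apply in_map_iff in Hs as [s0 [<- H0]].
    + rewrite removelast_last, firstn_app_short.
      2: { rewrite Hlen by eauto using In_firstn'. unfold j; lia. }
      destruct (HD s0) as [_ H]. specialize (H (Dz s0 H0)). tauto.
    + rewrite last_last in Hlast. destruct Hlast; discriminate.
    + rewrite removelast_last, firstn_app_short.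
      2: { rewrite Hlen by eauto using In_firstn'. unfold j; lia. }
      destruct (HD s0) as [_ H]. specialize (H (Dz s0 H0)). tauto.
Qed.
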